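(* Let $n\ge3$, let $i_1,\dots,i_n$ be the canonical generators of $Q_n$, let $j,k<n$ with $j\ne k$, let $x\in\langle i_1,\dots,i_{n-1}\rangle$ and $s\in\{1,-1\}$. If $i_j(i_kx)=s\,(i_k(i_jx))$, then $i_j(i_k(xi_n))=s\,(i_k(i_j(xi_n)))$.
   Context: Cayley--Dickson loops: $Q_0=\{1,-1\}\subset\mathbb{R}$ with conjugation $x^*=x$. For $n\ge1$, $Q_n=\{(x,0),(x,1)\mid x\in Q_{n-1}\}$ with multiplication $(x,0)(y,0)=(xy,0)$, $(x,0)(y,1)=(yx,1)$, $(x,1)(y,0)=(xy^*,1)$, $(x,1)(y,1)=(-y^*x,0)$ and conjugation $(x,0)^*=(x^*,0)$, $(x,1)^*=(-x,1)$, where $-(x,a)=(-x,a)$. $Q_n$ is a loop with neutral element $1=(1,0,\dots,0)$; $-1=(-1,0,\dots,0)$ commutes and associates with all elements. $Q_{n-1}$ is identified with the subloop $\{(x,0)\}\subset Q_n$. Canonical generators: $i_n=(1_{Q_{n-1}},1)\in Q_n$, and $i_1,\dots,i_{n-1}$ are the canonical generators of $Q_{n-1}\subset Q_n$. *)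

(* Defs.v *)
From Stdlib Require Import Arith.

(* Carrier of the Cayley--Dickson loop Q_n.
   Q_0 = {1,-1} is encoded by bool: false = 1, true = -1.
   Q_(n+1) = Q_n * bool, the pair (x,a) written (x,0)/(x,1) in the paper. *)
Fixpoint CD (n : nat) : Type :=
  match n with
  | 0 => bool
  | S m => (CD m * bool)%type
  end.

Fixpoint cd_neg (n : nat) : CD n -> CD n :=
  match n as n0 return CD n0 -> CD n0 with
  | 0 => negb
  | S m => fun p => (cd_neg m (fst p), snd p)
  end.

Fixpoint cd_conj (n : nat) : CD n -> CD n :=
  match n as n0 return CD n0 -> CD n0 with
  | 0 => fun x => x
  | S m => fun p => if snd p then (cd_neg m (fst p), true)
                    else (cd_conj m (fst p), false)
  end.

Fixpoint cd_mul (n : nat) : CD n -> CD n -> CD n :=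
  match n as n0 return CD n0 -> CD n0 -> CD n0 with
  | 0 => xorb
  | S m => fun p q =>
      let x := fst p in let a := snd p in
      let y := fst q in let b := snd q in
      match a, b with
      | false, false => (cd_mul m x y, false)
      | false, true  => (cd_mul m y x, true)
      | true,  false => (cd_mul m x (cd_conj m y), true)
      | true,  true  => (cd_neg m (cd_mul m (cd_conj m y) x), false)
      end
  end.

Fixpoint cd_one (n : nat) : CD n :=
  match n as n0 return CD n0 with
  | 0 => false
  | S m => (cd_one m, false)
  end.

(* Meaningful for 1 <= j <= n;
   other indices give junk values and are never used. *)
Fixpoint cd_gen (n : nat) (j : nat) : CD n :=
  match n as n0 return CD n0 with
  | 0 => false
  | S m => if Nat.eqb j (S m) then (cd_one m, true) else (cd_gen m j, false)
  end.

(* The subloop of Q_n generated by a set P: the smallest subset containing P and 1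
   and closed under multiplication (Q_n is finite, so closure under multiplication
   already gives closure under the divisions). *)
Inductive generated (n : nat) (P : CD n -> Prop) : CD n -> Prop :=
  | gen_base : forall x, P x -> generated n P x
  | gen_one : generated n P (cd_one n)
  | gen_mul : forall x y, generated n P x -> generated n P y ->
              generated n P (cd_mul n x y).

(* Main.v *)
Require Import Defs.
From Stdlib Require Import Arith Lia.

Lemma neg_neg : forall n x, cd_neg n (cd_neg n x) = x.
Proof. induction n; simpl; intros x. destruct x; auto. destruct x; simpl; rewrite IHn; auto. Qed.

Lemma conj_neg : forall n x, cd_conj n (cd_neg n x) = cd_neg n (cd_conj n x).
Proof. induction n; simpl; intros x. auto. destruct x as [x []]; simpl; try rewrite IHn; auto. Qed.

Lemma conj_conj : forall n x, cd_conj n (cd_conj n x) = x.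
Proof. induction n; simpl; intros x. auto. destruct x as [x []]; simpl; try rewrite IHn; try rewrite neg_neg; auto. Qed.

Lemma conj_one : forall n, cd_conj n (cd_one n) = cd_one n.
Proof. induction n; simpl; try rewrite IHn; auto. Qed.

Lemma mul_neg : forall n, (forall x y, cd_mul n (cd_neg n x) y = cd_neg n (cd_mul n x y))
  /\ (forall x y, cd_mul n x (cd_neg n y) = cd_neg n (cd_mul n x y)).
Proof.
  induction n; simpl. split; intros [] []; reflexivity.
  destruct IHn as [L R]. split; intros [x []] [y []]; simpl;
  rewrite ?L, ?R, ?conj_neg, ?L, ?R; reflexivity.
Qed.

Lemma mul_one : forall n, (forall y, cd_mul n (cd_one n) y = y)
  /\ (forall x, cd_mul n x (cd_one n) = x).
Proof.
  induction n; simpl. split; intros []; reflexivity.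
  destruct IHn as [L R]. split; intros [x []]; simpl;
  rewrite ?L, ?R, ?conj_one, ?R; reflexivity.
Qed.

Lemma conj_mul : forall n x y, cd_conj n (cd_mul n x y) = cd_mul n (cd_conj n y) (cd_conj n x).
Proof.
  induction n; simpl. intros [] []; reflexivity.
  intros [x []] [y []]; simpl.
  all: destruct (mul_neg n) as [L R]; rewrite ?conj_neg, ?IHn, ?conj_conj, ?L, ?R, ?neg_neg; reflexivity.
Qed.

Lemma conj_cases : forall n x, cd_conj n x = x \/ cd_conj n x = cd_neg n x.
Proof.
  induction n; simpl. auto.
  intros [x []]; simpl. right; auto.
  destruct (IHn x) as [H|H]; rewrite H; auto.
Qed.

Lemma gen_conj : forall n t, 1 <= t <= n -> cd_conj n (cd_gen n t) = cd_neg n (cd_gen n t).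
Proof.
  induction n; intros t Ht. lia.
  simpl. destruct (Nat.eqb_spec t (S n)). simpl; auto.
  simpl. rewrite IHn; auto. lia.
Qed.

Theorem mainTheorem9 :
  forall (n : nat), 3 <= n ->
  forall (j k : nat), 1 <= j < n -> 1 <= k < n -> j <> k ->
  forall (x : CD n),
    generated n (fun y => exists t, 1 <= t < n /\ y = cd_gen n t) x ->
  forall (s : CD n), s = cd_one n \/ s = cd_neg n (cd_one n) ->
    cd_mul n (cd_gen n j) (cd_mul n (cd_gen n k) x)
      = cd_mul n s (cd_mul n (cd_gen n k) (cd_mul n (cd_gen n j) x)) ->
    cd_mul n (cd_gen n j) (cd_mul n (cd_gen n k) (cd_mul n x (cd_gen n n)))
      = cd_mul n s (cd_mul n (cd_gen n k)
                      (cd_mul n (cd_gen n j) (cd_mul n x (cd_gen n n)))).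
Proof.
  intros n Hn j k Hj Hk Hjk x Hx s Hs H.
  destruct n as [|m]. lia.
  assert (Hsnd : snd x = false).
  { clear H Hs. induction Hx as [y [t [Ht ->]]| |y z _ IH1 _ IH2].
    - simpl. destruct (Nat.eqb_spec t (S m)). lia. reflexivity.
    - reflexivity.
    - destruct y as [y a], z as [z b]; simpl in *; subst; reflexivity. }
  clear Hx.
  destruct x as [x' b]; simpl in Hsnd; subst b.
  assert (Hs' : exists s', s = (s', false) /\ (s' = cd_one m \/ s' = cd_neg m (cd_one m))).
  { destruct Hs as [->| ->]; simpl; eauto. }
  destruct Hs' as [s' [-> Hs']]. clear Hs.
  assert (Ej : cd_gen (S m) j = (cd_gen m j, false)).
  { simpl. destruct (Nat.eqb_spec j (S m)). lia. reflexivity. }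
  assert (Ek : cd_gen (S m) k = (cd_gen m k, false)).
  { simpl. destruct (Nat.eqb_spec k (S m)). lia. reflexivity. }
  assert (En : cd_gen (S m) (S m) = (cd_one m, true)).
  { simpl. rewrite Nat.eqb_refl. reflexivity. }
  rewrite Ej, Ek in H. rewrite Ej, Ek, En. simpl in H |- *.
  apply (f_equal fst) in H. simpl in H.
  rewrite (proj1 (mul_one m)).
  apply (f_equal (cd_conj m)) in H.
  rewrite !conj_mul, !gen_conj in H by lia.
  assert (Cs : cd_conj m s' = s').
  { destruct Hs' as [-> | ->]. apply conj_one. rewrite conj_neg, conj_one; auto. }
  rewrite Cs in H.
  destruct (mul_neg m) as [L R].
  rewrite ?L, ?R, ?neg_neg in H.
  destruct (conj_cases m x') as [C|C]; rewrite C in H; rewrite ?L, ?R, ?neg_neg in H.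
  - rewrite H; reflexivity.
  - apply (f_equal (cd_neg m)) in H. rewrite !neg_neg in H. rewrite H; reflexivity.
Qed.
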